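(* Let $\rho$ be a valuation of a fixpoint context $\Theta$, let $(X:\sigma)\in\Theta$, and for $\varphi\in\mathcal{L}^s(\Theta;\tau)$ let $[\![X.\varphi]\!]\rho : \mathcal{P}([\![\sigma]\!]) \to \mathcal{P}([\![\tau]\!])$ be the map $S \mapsto [\![\varphi]\!]\rho[S/X]$. (1) If $\varphi \in \mathcal{L}^s(\Theta;\tau)$ for any $s\in\{\pm,+,-\}$, then $[\![X.\varphi]\!]\rho$ is monotone. (2) If $\varphi \in \mathcal{L}^+(\Theta;\tau)$, then $[\![X.\varphi]\!]\rho$ preserves directed unions. (3) If $\varphi\in\mathcal{L}^-(\Theta;\tau)$, then $[\![X.\varphi]\!]\rho$ preserves codirected intersections.
   Context: Pure types: closed types of $\tau ::= \mathbf{1} \mid \tau\times\tau \mid \tau\to\tau \mid \tau+\tau \mid \alpha \mid \mu\alpha.\tau$, interpreted as Scott domains: $[\![\mathbf{1}]\!]=\{\bot\le\top\}$; products componentwise with projections $\pi_1,\pi_2$; $[\![\tau\to\sigma]\!]$ = Scott-continuous functions with pointwise order; $[\![\tau_1+\tau_2]\!]$ = disjoint union with a new bottom, with injections $\mathrm{inj}_i$; $[\![\mu\alpha.\tau]\!]$ = canonical bilimit solution with inverse isomorphisms $\mathrm{fold}:[\![\tau[\mu\alpha.\tau/\alpha]]\!]\to[\![\mu\alpha.\tau]\!]$, $\mathrm{unfold}$. A family of sets is directed (resp. codirected) if nonempty and any two members are contained in (resp. contain) a common member. Iteration terms: $t ::= i \mid 0 \mid t+1$. Fixpoint contexts $\Theta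 = X_1:\sigma_1,\dots,X_n:\sigma_n$. For $s\in\{\pm,+,-\}$, $\mathcal{L}^s(\Theta;\tau)$ is generated by: $\mathrm{True},\mathrm{False}$; closure under $\wedge,\vee$; $\langle()\rangle\in\mathcal{L}^s(\Theta;\mathbf{1})$; $\langle\pi_i\rangle\varphi$ (type $\tau_1\times\tau_2$, $\varphi$ of type $\tau_i$); $\langle\mathrm{inj}_i\rangle\varphi$ (type $\tau_1+\tau_2$, $\varphi$ of type $\tau_i$); $\langle\mathrm{fold}\rangle\varphi$ (type $\mu\alpha.\tau$, $\varphi$ of type $\tau[\mu\alpha.\tau/\alpha]$); $X$ if $(X:\tau)\in\Theta$; weakening of $\Theta$; $(\mu^t X)\varphi,(\nu^t X)\varphi\in\mathcal{L}^s(\Theta;\tau)$ if $\varphi\in\mathcal{L}^s(\Theta,X:\tau;\tau)$; $(\exists i)\varphi\in\mathcal{L}^+(\Theta;\tau)$ if $\varphi\in\mathcal{L}^+(\Theta;\tau)$ and $i \mathrel{\mathrm{Pos}} \varphi$; $(\forall i)\varphi\in\mathcal{L}^-(\Theta;\tau)$ if $\varphi\in\mathcal{L}^-(\Theta;\tau)$ and $i\mathrel{\mathrm{Neg}}\varphi$; $\psi\Rightarrow\varphi\in\mathcal{L}^s(\,;\sigma\to\tau)$ if $\psi\in\mathcal{L}^{-s}(\,;\sigma)$ and $\varphi\in\mathcal{L}^s(\,;\tau)$, where $-\pm=\pm$, $-+=-$, $--=+$. Pos, Neg are inductively defined: $i\mathrel{\mathrm{Pos}}\varphi$ and $i\mathrel{\mathrm{Neg}}\varphi$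 hold if $i$ not free in $\varphi$; both preserved by $\wedge,\vee$ and the modalities; $i\mathrel{\mathrm{Pos}}(\psi\Rightarrow\varphi)$ if $i\mathrel{\mathrm{Neg}}\psi$ and $i\mathrel{\mathrm{Pos}}\varphi$; $i\mathrel{\mathrm{Neg}}(\psi\Rightarrow\varphi)$ if $i\mathrel{\mathrm{Pos}}\psi$ and $i\mathrel{\mathrm{Neg}}\varphi$; $i\mathrel{\mathrm{Pos}}(\exists j)\varphi$ if $i\mathrel{\mathrm{Pos}}\varphi$; $i\mathrel{\mathrm{Neg}}(\forall j)\varphi$ if $i\mathrel{\mathrm{Neg}}\varphi$; $i\mathrel{\mathrm{Pos}}(\mu^tX)\varphi$ if $i\mathrel{\mathrm{Pos}}\varphi$; $i\mathrel{\mathrm{Pos}}(\nu^tX)\varphi$ if $i\mathrel{\mathrm{Pos}}\varphi$ and $i$ not free in $t$; $i\mathrel{\mathrm{Neg}}(\nu^tX)\varphi$ if $i\mathrel{\mathrm{Neg}}\varphi$; $i\mathrel{\mathrm{Neg}}(\mu^tX)\varphi$ if $i\mathrel{\mathrm{Neg}}\varphi$ and $i$ not free in $t$. Semantics: a valuation $\rho$ of $\Theta$ maps each $(X:\sigma)\in\Theta$ to $\rho(X)\subseteq[\![\sigma]\!]$ and iteration variables to naturals. $[\![\mathrm{True}]\!]\rho=[\![\tau]\!]$, $[\![\mathrm{False}]\!]\rho=\emptyset$, $\wedge,\vee$ are $\cap,\cup$, $[\![X]\!]\rho=\rho(X)$, $[\![\langle()\rangle]\!]\rho=\{\top\}$,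 $[\![\langle\pi_i\rangle\varphi]\!]\rho=\{x\mid \pi_i(x)\in[\![\varphi]\!]\rho\}$, $[\![\langle\mathrm{inj}_i\rangle\varphi]\!]\rho=\{\mathrm{inj}_i(x)\mid x\in[\![\varphi]\!]\rho\}$, $[\![\langle\mathrm{fold}\rangle\varphi]\!]\rho=\{x\mid\mathrm{unfold}(x)\in[\![\varphi]\!]\rho\}$, $[\![\psi\Rightarrow\varphi]\!]\rho=\{f\mid\forall x\in[\![\psi]\!]\rho,\ f(x)\in[\![\varphi]\!]\rho\}$, $[\![(\exists i)\varphi]\!]\rho=\bigcup_{n}[\![\varphi]\!]\rho[n/i]$, $[\![(\forall i)\varphi]\!]\rho=\bigcap_{n}[\![\varphi]\!]\rho[n/i]$, and with $F(S)=[\![\varphi]\!]\rho[S/X]$, $n=[\![t]\!]\rho$: $[\![(\mu^tX)\varphi]\!]\rho=F^n(\emptyset)$, $[\![(\nu^tX)\varphi]\!]\rho=F^n([\![\tau]\!])$. *)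

(* Defs.v *)
From Stdlib Require Import List PeanoNat Bool.
Import ListNotations.


Inductive ty : Type :=
| TUnit : ty
| TProd : ty -> ty -> ty
| TArr  : ty -> ty -> ty
| TSum  : ty -> ty -> ty
| TVar  : nat -> ty
| TMu   : ty -> ty.

Definition ty_eq_dec (a b : ty) : {a = b} + {a <> b}.
Proof. decide equality; apply Nat.eq_dec. Defined.

Fixpoint lift_ty (k : nat) (t : ty) : ty :=
  match t with
  | TUnit => TUnit
  | TProd a b => TProd (lift_ty k a) (lift_ty k b)
  | TArr a b => TArr (lift_ty k a) (lift_ty k b)
  | TSum a b => TSum (lift_ty k a) (lift_ty k b)
  | TVar n => if Nat.ltb n k then TVar n else TVar (S n)
  | TMu b => TMu (lift_ty (S k) b)
  end.

Fixpoint subst_ty (k : nat) (u : ty) (t : ty) : ty :=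
  match t with
  | TUnit => TUnit
  | TProd a b => TProd (subst_ty k u a) (subst_ty k u b)
  | TArr a b => TArr (subst_ty k u a) (subst_ty k u b)
  | TSum a b => TSum (subst_ty k u a) (subst_ty k u b)
  | TVar n => if Nat.eqb n k then u else if Nat.ltb n k then TVar n else TVar (pred n)
  | TMu b => TMu (subst_ty (S k) (lift_ty 0 u) b)
  end.

Definition unroll (b : ty) : ty := subst_ty 0 (TMu b) b.

Fixpoint closed_at (k : nat) (t : ty) : bool :=
  match t with
  | TUnit => true
  | TProd a b | TArr a b | TSum a b => closed_at k a && closed_at k b
  | TVar n => Nat.ltb n k
  | TMu b => closed_at (S k) b
  end.
Definition closed_ty (t : ty) : Prop := closed_at 0 t = true.

(** The Scott-domain model of the paper is one instance. *)
Record interp : Type := {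
  dom : ty -> Type;
  top : dom TUnit;
  proj1 : forall a b, dom (TProd a b) -> dom a;
  proj2 : forall a b, dom (TProd a b) -> dom b;
  inj1 : forall a b, dom a -> dom (TSum a b);
  inj2 : forall a b, dom b -> dom (TSum a b);
  inj1_inj : forall a b (x y : dom a), inj1 a b x = inj1 a b y -> x = y;
  inj2_inj : forall a b (x y : dom b), inj2 a b x = inj2 a b y -> x = y;
  inj12_disj : forall a b (x : dom a) (y : dom b), inj1 a b x <> inj2 a b y;
  ufold : forall b, dom (TMu b) -> dom (unroll b);
  fold : forall b, dom (unroll b) -> dom (TMu b);
  fold_ufold : forall b x, fold b (ufold b x) = x;
  ufold_fold : forall b x, ufold b (fold b x) = x;
  app : forall a b, dom (TArr a b) -> dom a -> dom b
}.

Inductive iterm : Type :=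
| IVar : nat -> iterm
| IZero : iterm
| ISucc : iterm -> iterm.

Fixpoint isem (rI : nat -> nat) (t : iterm) : nat :=
  match t with
  | IVar i => rI i
  | IZero => 0
  | ISucc t => S (isem rI t)
  end.

Fixpoint ifree_t (i : nat) (t : iterm) : Prop :=
  match t with
  | IVar j => i = j
  | IZero => False
  | ISucc t => ifree_t i t
  end.

Inductive form : Type :=
| FTrue : form
| FFalse : form
| FAnd : form -> form -> form
| FOr : form -> form -> form
| FUnit : form
| FProj1 : form -> form
| FProj2 : form -> form
| FInj1 : form -> form
| FInj2 : form -> form
| FFold : form -> form
| FVar : nat -> form
| FMu : iterm -> nat -> form -> form
| FNu : iterm -> nat -> form -> form
| FEx : nat -> form -> form
| FAll : nat -> form -> form
| FImp : form -> form -> form.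

Fixpoint ifree (i : nat) (f : form) : Prop :=
  match f with
  | FTrue | FFalse | FUnit | FVar _ => False
  | FAnd a b | FOr a b | FImp a b => ifree i a \/ ifree i b
  | FProj1 a | FProj2 a | FInj1 a | FInj2 a | FFold a => ifree i a
  | FMu t _ a | FNu t _ a => ifree_t i t \/ ifree i a
  | FEx j a | FAll j a => i <> j /\ ifree i a
  end.

Inductive Pos (i : nat) : form -> Prop :=
| Pos_nf : forall f, ~ ifree i f -> Pos i f
| Pos_and : forall a b, Pos i a -> Pos i b -> Pos i (FAnd a b)
| Pos_or : forall a b, Pos i a -> Pos i b -> Pos i (FOr a b)
| Pos_p1 : forall a, Pos i a -> Pos i (FProj1 a)
| Pos_p2 : forall a, Pos i a -> Pos i (FProj2 a)
| Pos_i1 : forall a, Pos i a -> Pos i (FInj1 a)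
| Pos_i2 : forall a, Pos i a -> Pos i (FInj2 a)
| Pos_fold : forall a, Pos i a -> Pos i (FFold a)
| Pos_imp : forall a b, Neg i a -> Pos i b -> Pos i (FImp a b)
| Pos_ex : forall j a, Pos i a -> Pos i (FEx j a)
| Pos_mu : forall t X a, Pos i a -> Pos i (FMu t X a)
| Pos_nu : forall t X a, Pos i a -> ~ ifree_t i t -> Pos i (FNu t X a)
with Neg (i : nat) : form -> Prop :=
| Neg_nf : forall f, ~ ifree i f -> Neg i f
| Neg_and : forall a b, Neg i a -> Neg i b -> Neg i (FAnd a b)
| Neg_or : forall a b, Neg i a -> Neg i b -> Neg i (FOr a b)
| Neg_p1 : forall a, Neg i a -> Neg i (FProj1 a)
| Neg_p2 : forall a, Neg i a -> Neg i (FProj2 a)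
| Neg_i1 : forall a, Neg i a -> Neg i (FInj1 a)
| Neg_i2 : forall a, Neg i a -> Neg i (FInj2 a)
| Neg_fold : forall a, Neg i a -> Neg i (FFold a)
| Neg_imp : forall a b, Pos i a -> Neg i b -> Neg i (FImp a b)
| Neg_all : forall j a, Neg i a -> Neg i (FAll j a)
| Neg_nu : forall t X a, Neg i a -> Neg i (FNu t X a)
| Neg_mu : forall t X a, Neg i a -> ~ ifree_t i t -> Neg i (FMu t X a).

(** * Polarities and typing: wf s Theta tau phi  <->  phi \in L^s(Theta; tau) *)
Inductive pol : Type := PBoth | PPlus | PMinus .
Definition negp (s : pol) : pol :=
  match s with PBoth => PBoth | PPlus => PMinus | PMinus => PPlus end.

Definition ctx := list (nat * ty).
Fixpoint lookup (G : ctx) (X : nat) : option ty :=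
  match G with
  | [] => None
  | (Y, t) :: G' => if Nat.eqb X Y then Some t else lookup G' X
  end.
Definition ctx_closed (G : ctx) : Prop := forall p, In p G -> closed_ty (snd p).

Inductive wf : pol -> ctx -> ty -> form -> Prop :=
| wf_true : forall s G t, wf s G t FTrue
| wf_false : forall s G t, wf s G t FFalse
| wf_and : forall s G t a b, wf s G t a -> wf s G t b -> wf s G t (FAnd a b)
| wf_or : forall s G t a b, wf s G t a -> wf s G t b -> wf s G t (FOr a b)
| wf_unit : forall s G, wf s G TUnit FUnit
| wf_p1 : forall s G t1 t2 a, wf s G t1 a -> wf s G (TProd t1 t2) (FProj1 a)
| wf_p2 : forall s G t1 t2 a, wf s G t2 a -> wf s G (TProd t1 t2) (FProj2 a)
| wf_i1 : forall s G t1 t2 a, wf s G t1 a -> wf s G (TSum t1 t2) (FInj1 a)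
| wf_i2 : forall s G t1 t2 a, wf s G t2 a -> wf s G (TSum t1 t2) (FInj2 a)
| wf_fold : forall s G b a, wf s G (unroll b) a -> wf s G (TMu b) (FFold a)
| wf_var : forall s G X t, lookup G X = Some t -> wf s G t (FVar X)
| wf_weak : forall s G G' t a, wf s G t a ->
    (forall X u, lookup G X = Some u -> lookup G' X = Some u) -> wf s G' t a
| wf_mu : forall s G t X a it, wf s ((X, t) :: G) t a -> wf s G t (FMu it X a)
| wf_nu : forall s G t X a it, wf s ((X, t) :: G) t a -> wf s G t (FNu it X a)
| wf_ex : forall G t i a, wf PPlus G t a -> Pos i a -> wf PPlus G t (FEx i a)
| wf_all : forall G t i a, wf PMinus G t a -> Neg i a -> wf PMinus G t (FAll i a)
| wf_imp : forall s t1 t2 a b, wf (negp s) [] t1 a -> wf s [] t2 b ->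
    wf s [] (TArr t1 t2) (FImp a b).

Section Sem.
Variable I : interp.

Definition pset (t : ty) := dom I t -> Prop.

(** valuation of fixpoint variables: a set at every type for every name
    (only the entry at the type assigned by the context matters) *)
Definition valX := nat -> forall t : ty, pset t.

Definition updX (r : valX) (X : nat) (t : ty) (S : pset t) : valX :=
  fun Y u => if Nat.eqb Y X then
               match ty_eq_dec t u with
               | left e => eq_rect t pset S u e
               | right _ => r Y u
               end
             else r Y u.

Definition updI (rI : nat -> nat) (i n : nat) : nat -> nat :=
  fun j => if Nat.eqb j i then n else rI j.

Fixpoint sem (f : form) (t : ty) (r : valX) (rI : nat -> nat) {struct f} : pset t :=
  match f with
  | FTrue => fun _ => True
  | FFalse => fun _ => False
  | FAnd a b => fun x => sem a t r rI x /\ sem b t r rI x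
  | FOr a b => fun x => sem a t r rI x \/ sem b t r rI x
  | FUnit => match t return pset t with
             | TUnit => fun x => x = top I
             | _ => fun _ => False end
  | FProj1 a => match t return pset t with
                | TProd t1 t2 => fun x => sem a t1 r rI (proj1 I t1 t2 x)
                | _ => fun _ => False end
  | FProj2 a => match t return pset t with
                | TProd t1 t2 => fun x => sem a t2 r rI (proj2 I t1 t2 x)
                | _ => fun _ => False end
  | FInj1 a => match t return pset t with
               | TSum t1 t2 => fun y => exists x, sem a t1 r rI x /\ y = inj1 I t1 t2 x
               | _ => fun _ => False end
  | FInj2 a => match t return pset t with
               | TSum t1 t2 => fun y => exists x, sem a t2 r rI x /\ y = inj2 I t1 t2 x
               | _ => fun _ => False end
  | FFold a => match t return pset t with
               | TMu b => fun x => sem a (unroll b) r rI (ufold I b x)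
               | _ => fun _ => False end
  | FVar X => r X t
  | FMu it X a =>
      Nat.iter (isem rI it) (fun S => sem a t (updX r X t S) rI) (fun _ => False)
  | FNu it X a =>
      Nat.iter (isem rI it) (fun S => sem a t (updX r X t S) rI) (fun _ => True)
  | FEx i a => fun x => exists n, sem a t r (updI rI i n) x
  | FAll i a => fun x => forall n, sem a t r (updI rI i n) x
  | FImp a b => match t return pset t with
                | TArr t1 t2 => fun g => forall x, sem a t1 r rI x -> sem b t2 r rI (app I t1 t2 g x)
                | _ => fun _ => False end
  end.

Definition semX (f : form) (t : ty) (r : valX) (rI : nat -> nat) (X : nat) (s : ty)
  : pset s -> pset t := fun S => sem f t (updX r X s S) rI.

End Sem.

Definition subset {A : Type} (S T : A -> Prop) : Prop := forall x, S x -> T x.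
Definition set_eq {A : Type} (S T : A -> Prop) : Prop := forall x, S x <-> T x.
Definition directed {A : Type} (F : (A -> Prop) -> Prop) : Prop :=
  (exists S, F S) /\
  forall S T, F S -> F T -> exists U, F U /\ subset S U /\ subset T U.
Definition codirected {A : Type} (F : (A -> Prop) -> Prop) : Prop :=
  (exists S, F S) /\
  forall S T, F S -> F T -> exists U, F U /\ subset U S /\ subset U T.
Definition bigunion {A : Type} (F : (A -> Prop) -> Prop) : A -> Prop :=
  fun x => exists S, F S /\ S x.
Definition bigcap {A : Type} (F : (A -> Prop) -> Prop) : A -> Prop :=
  fun x => forall S, F S -> S x.
Definition image_fam {A B : Type} (f : (A -> Prop) -> (B -> Prop))
  (F : (A -> Prop) -> Prop) : (B -> Prop) -> Prop :=
  fun T => exists S, F S /\ T = f S.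

(* Main.v *)
Require Import Defs.
From Stdlib Require Import List PeanoNat Bool Classical.
Import ListNotations.

Definition mono {A B : Type} (H : (A -> Prop) -> (B -> Prop)) :=
  forall S T, subset S T -> subset (H S) (H T).
Definition contU {A B : Type} (H : (A -> Prop) -> (B -> Prop)) :=
  forall F, directed F -> set_eq (H (bigunion F)) (bigunion (image_fam H F)).
Definition contI {A B : Type} (H : (A -> Prop) -> (B -> Prop)) :=
  forall F, codirected F -> set_eq (H (bigcap F)) (bigcap (image_fam H F)).
Definition props {A B : Type} (s : pol) (H : (A -> Prop) -> (B -> Prop)) :=
  mono H /\ (s = PPlus -> contU H) /\ (s = PMinus -> contI H).

Section Gen.
Context {A B : Type}.

Lemma props_ext s (H H' : (A -> Prop) -> (B -> Prop)) :
  (forall S x, H S x <-> H' S x) -> props s H' -> props s H.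
Proof.
  intros E [M [CU CI]]. split; [|split].
  - intros S T ST x Hx. apply E. apply (M S T ST). apply E. exact Hx.
  - intros Hs F D x. split.
    + intros Hx. apply E in Hx. apply (CU Hs F D) in Hx.
      destruct Hx as [U [[S0 [FS0 ->]] Hx]]. exists (H S0). split.
      * exists S0; auto.
      * apply E; exact Hx.
    + intros [U [[S0 [FS0 ->]] Hx]]. apply E. apply (CU Hs F D).
      exists (H' S0). split; [exists S0; auto | apply E; exact Hx].
  - intros Hs F D x. split.
    + intros Hx U [S0 [FS0 ->]]. apply E. apply E in Hx. apply (CI Hs F D) in Hx.
      apply Hx. exists S0; auto.
    + intros Hx. apply E. apply (CI Hs F D). intros U [S0 [FS0 ->]].
      apply E. apply Hx. exists S0; auto.
Qed.

Lemma props_const s (C : B -> Prop) : props s (fun _ : A -> Prop => C).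
Proof.
  split; [|split].
  - intros S T _ x Hx; exact Hx.
  - intros _ F [[S0 FS0] _] x. split.
    + intros Hx. exists C. split; [exists S0; auto | exact Hx].
    + intros [U [[S1 [_ ->]] Hx]]. exact Hx.
  - intros _ F [[S0 FS0] _] x. split.
    + intros Hx U [S1 [_ ->]]. exact Hx.
    + intros Hx. apply Hx. exists S0; auto.
Qed.

Lemma props_id s : props s (fun S : A -> Prop => S).
Proof.
  split; [|split].
  - intros S T ST; exact ST.
  - intros _ F _ x. split.
    + intros [U [FU Hx]]. exists U. split; [exists U; auto | exact Hx].
    + intros [U [[S1 [FS1 ->]] Hx]]. exists S1; auto.
  - intros _ F _ x. split.
    + intros Hx U [S1 [FS1 ->]]. apply Hx; exact FS1.
    + intros Hx U FU. apply Hx. exists U; auto.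
Qed.

Lemma mono_unionsub {B' : Type} (H : (A -> Prop) -> (B' -> Prop)) F S :
  mono H -> F S -> subset (H S) (H (bigunion F)).
Proof. intros M FS. apply M. intros x Hx. exists S; auto. Qed.

Lemma mono_capsub {B' : Type} (H : (A -> Prop) -> (B' -> Prop)) F S :
  mono H -> F S -> subset (H (bigcap F)) (H S).
Proof. intros M FS. apply M. intros x Hx. apply Hx; exact FS. Qed.

Lemma props_and s (H1 H2 : (A -> Prop) -> (B -> Prop)) :
  props s H1 -> props s H2 -> props s (fun S x => H1 S x /\ H2 S x).
Proof.
  intros [M1 [U1 I1]] [M2 [U2 I2]]. split; [|split].
  - intros S T ST x [a b]. split; [apply (M1 S T ST) | apply (M2 S T ST)]; auto.
  - intros Hs F D x. split.
    + intros [a b]. apply (U1 Hs F D) in a. apply (U2 Hs F D) in b.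
      destruct a as [V1 [[S1 [FS1 ->]] a]]. destruct b as [V2 [[S2 [FS2 ->]] b]].
      destruct D as [_ D]. destruct (D S1 S2 FS1 FS2) as [U [FU [s1 s2]]].
      exists (fun x => H1 U x /\ H2 U x). split; [exists U; auto|].
      split; [apply (M1 S1 U s1) | apply (M2 S2 U s2)]; auto.
    + intros [V [[S1 [FS1 ->]] [a b]]]. split.
      * apply (mono_unionsub H1 F S1 M1 FS1); auto.
      * apply (mono_unionsub H2 F S1 M2 FS1); auto.
  - intros Hs F D x. split.
    + intros [a b] V [S1 [FS1 ->]]. split.
      * apply (mono_capsub H1 F S1 M1 FS1); auto.
      * apply (mono_capsub H2 F S1 M2 FS1); auto.
    + intros Hx. split.
      * apply (I1 Hs F D). intros V [S1 [FS1 ->]]. apply (Hx (fun x => H1 S1 x /\ H2 S1 x)). exists S1; auto.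
      * apply (I2 Hs F D). intros V [S1 [FS1 ->]]. apply (Hx (fun x => H1 S1 x /\ H2 S1 x)). exists S1; auto.
Qed.

Lemma props_or s (H1 H2 : (A -> Prop) -> (B -> Prop)) :
  props s H1 -> props s H2 -> props s (fun S x => H1 S x \/ H2 S x).
Proof.
  intros [M1 [U1 I1]] [M2 [U2 I2]]. split; [|split].
  - intros S T ST x [a|b]; [left; apply (M1 S T ST) | right; apply (M2 S T ST)]; auto.
  - intros Hs F D x. split.
    + intros [a|b].
      * apply (U1 Hs F D) in a. destruct a as [V1 [[S1 [FS1 ->]] a]].
        exists (fun x => H1 S1 x \/ H2 S1 x). split; [exists S1; auto | left; auto].
      * apply (U2 Hs F D) in b. destruct b as [V1 [[S1 [FS1 ->]] b]].
        exists (fun x => H1 S1 x \/ H2 S1 x). split; [exists S1; auto | right; auto].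
    + intros [V [[S1 [FS1 ->]] [a|b]]].
      * left. apply (mono_unionsub H1 F S1 M1 FS1); auto.
      * right. apply (mono_unionsub H2 F S1 M2 FS1); auto.
  - intros Hs F D x. split.
    + intros [a|b] V [S1 [FS1 ->]].
      * left. apply (mono_capsub H1 F S1 M1 FS1); auto.
      * right. apply (mono_capsub H2 F S1 M2 FS1); auto.
    + intros Hx. destruct (classic (H1 (bigcap F) x)) as [a|na]; [left; exact a|].
      right. assert (exists S1, F S1 /\ ~ H1 S1 x) as [S1 [FS1 n1]].
      { apply NNPP. intros Hn. apply na. apply (I1 Hs F D).
        intros V [S1 [FS1 ->]]. apply NNPP. intros n. apply Hn. exists S1; auto. }
      apply (I2 Hs F D). intros V [S2 [FS2 ->]].
      destruct D as [_ D]. destruct (D S1 S2 FS1 FS2) as [U [FU [u1 u2]]].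
      assert (HU : H1 U x \/ H2 U x) by (apply (Hx (fun x => H1 U x \/ H2 U x)); exists U; auto).
      destruct HU as [a|b].
      * exfalso. apply n1. apply (M1 U S1 u1); auto.
      * apply (M2 U S2 u2); auto.
Qed.

Lemma props_pre {C : Type} s (H : (A -> Prop) -> (B -> Prop)) (f : C -> B) :
  props s H -> props s (fun S x => H S (f x)).
Proof.
  intros [M [U I]]. split; [|split].
  - intros S T ST x Hx. apply (M S T ST); auto.
  - intros Hs F D x. split.
    + intros Hx. apply (U Hs F D) in Hx. destruct Hx as [V [[S1 [FS1 ->]] a]].
      exists (fun x => H S1 (f x)). split; [exists S1; auto | auto].
    + intros [V [[S1 [FS1 ->]] a]]. apply (mono_unionsub H F S1 M FS1); auto.
  - intros Hs F D x. split.
    + intros Hx V [S1 [FS1 ->]]. apply (mono_capsub H F S1 M FS1); auto.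
    + intros Hx. apply (I Hs F D). intros V [S1 [FS1 ->]].
      apply (Hx (fun x => H S1 (f x))). exists S1; auto.
Qed.

Lemma props_inj {C : Type} s (H : (A -> Prop) -> (C -> Prop)) (f : C -> B) :
  (forall a b, f a = f b -> a = b) ->
  props s H -> props s (fun S y => exists x, H S x /\ y = f x).
Proof.
  intros finj [M [U I]]. split; [|split].
  - intros S T ST y [x [Hx ->]]. exists x; split; auto. apply (M S T ST); auto.
  - intros Hs F D y. split.
    + intros [x [Hx ->]]. apply (U Hs F D) in Hx. destruct Hx as [V [[S1 [FS1 ->]] a]].
      exists (fun y => exists x, H S1 x /\ y = f x). split; [exists S1; auto | exists x; auto].
    + intros [V [[S1 [FS1 ->]] [x [a ->]]]]. exists x; split; auto.
      apply (mono_unionsub H F S1 M FS1); auto.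
  - intros Hs F D y. split.
    + intros [x [Hx ->]] V [S1 [FS1 ->]]. exists x; split; auto.
      apply (mono_capsub H F S1 M FS1); auto.
    + intros Hx. destruct D as [[S0 FS0] D'].
      destruct (Hx (fun y => exists x, H S0 x /\ y = f x)) as [x0 [_ ->]]; [exists S0; auto|].
      exists x0; split; auto. apply (I Hs F (conj (ex_intro _ S0 FS0) D')).
      intros V [S1 [FS1 ->]].
      destruct (Hx (fun y => exists x, H S1 x /\ y = f x)) as [x1 [h1 e1]]; [exists S1; auto|].
      apply finj in e1. subst; auto.
Qed.



Lemma props_all s (H : nat -> (A -> Prop) -> (B -> Prop)) :
  (forall n, props s (H n)) -> s = PMinus -> props s (fun S x => forall n, H n S x).
Proof.
  intros P Hs0. split; [|split].
  - intros S T ST x Hx n. apply (Logic.proj1 (P n) S T ST); auto.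
  - intros Hs; rewrite Hs0 in Hs; discriminate.
  - intros Hs F D x. split.
    + intros Hx V [S1 [FS1 ->]] n.
      apply (mono_capsub (H n) F S1 (Logic.proj1 (P n)) FS1); auto.
    + intros Hx n. apply (Logic.proj2 (Logic.proj2 (P n)) Hs F D). intros V [S1 [FS1 ->]].
      apply (Hx (fun x => forall n, H n S1 x)). exists S1; auto.
Qed.

Lemma props_ex' s (H : nat -> (A -> Prop) -> (B -> Prop)) :
  (forall n, props s (H n)) -> s = PPlus -> props s (fun S x => exists n, H n S x).
Proof.
  intros P Hs0. split; [|split].
  - intros S T ST x [n Hx]. exists n. apply (Logic.proj1 (P n) S T ST); auto.
  - intros Hs F D x. split.
    + intros [n Hx]. apply (Logic.proj1 (Logic.proj2 (P n)) Hs F D) in Hx.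
      destruct Hx as [V [[S1 [FS1 ->]] a]].
      exists (fun x => exists n, H n S1 x). split; [exists S1; auto | exists n; auto].
    + intros [V [[S1 [FS1 ->]] [n a]]]. exists n.
      apply (mono_unionsub (H n) F S1 (Logic.proj1 (P n)) FS1); auto.
  - intros Hs; rewrite Hs0 in Hs; discriminate.
Qed.

Lemma props_iter s (H : (A -> Prop) -> (B -> Prop) -> (B -> Prop)) (b : B -> Prop) :
  (forall T, props s (H T)) -> (forall S, props s (fun T => H T S)) ->
  forall k, props s (fun T => Nat.iter k (H T) b).
Proof.
  intros P1 P2.
  assert (Mk : forall k, mono (fun T => Nat.iter k (H T) b)).
  { induction k as [|k IH]; simpl.
    - intros S T _ x Hx; exact Hx.
    - intros S T ST x Hx. apply (Logic.proj1 (P2 _) S T ST).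
      apply (Logic.proj1 (P1 S) _ _ (IH S T ST)). exact Hx. }
  induction k as [|k IH].
  - exact (props_const s b).
  - split; [apply Mk|]. destruct IH as [_ [IU II]]. split.
    + intros Hs F D x. set (g := fun T => Nat.iter k (H T) b). simpl. split.
      * intros Hx.
        assert (Hx2 : H (bigunion F) (bigunion (image_fam g F)) x).
        { apply (Logic.proj1 (P1 _) (g (bigunion F))); [|exact Hx].
          intros y Hy. apply (IU Hs F D y). exact Hy. }
        assert (Dg : directed (image_fam g F)).
        { destruct D as [[S0 FS0] D]. split.
          - exists (g S0). exists S0; auto.
          - intros V1 V2 [S1 [FS1 ->]] [S2 [FS2 ->]].
            destruct (D S1 S2 FS1 FS2) as [U [FU [u1 u2]]].
            exists (g U). split; [exists U; auto|]. split; apply Mk; auto. }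
        apply (Logic.proj1 (Logic.proj2 (P1 _)) Hs _ Dg) in Hx2.
        destruct Hx2 as [V [[W [[T [FT ->]] ->]] Hx2]].
        apply (Logic.proj1 (Logic.proj2 (P2 (g T))) Hs F D) in Hx2.
        destruct Hx2 as [V [[T' [FT' ->]] Hx2]].
        destruct D as [_ D]. destruct (D T T' FT FT') as [U [FU [u1 u2]]].
        exists (H U (g U)). split; [exists U; auto|].
        apply (Logic.proj1 (P1 U) (g T)); [apply Mk; auto|].
        apply (Logic.proj1 (P2 (g T)) T' U u2). exact Hx2.
      * intros [V [[T [FT ->]] Hx]].
        assert (TU : subset T (bigunion F)) by (intros y Hy; exists T; auto).
        apply (Logic.proj1 (P2 _) T); auto.
        apply (Logic.proj1 (P1 T) (g T)); auto. apply Mk; auto.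
    + intros Hs F D x. set (g := fun T => Nat.iter k (H T) b). simpl. split.
      * intros Hx V [T [FT ->]].
        assert (TU : subset (bigcap F) T) by (intros y Hy; apply Hy; auto).
        apply (Logic.proj1 (P1 T) (g (bigcap F))); [apply Mk; auto|].
        apply (Logic.proj1 (P2 _) (bigcap F)); auto.
      * intros Hx.
        apply (Logic.proj1 (P1 _) (bigcap (image_fam g F))).
        { intros y Hy. apply (II Hs F D y). exact Hy. }
        assert (Dg : codirected (image_fam g F)).
        { destruct D as [[S0 FS0] D]. split.
          - exists (g S0). exists S0; auto.
          - intros V1 V2 [S1 [FS1 ->]] [S2 [FS2 ->]].
            destruct (D S1 S2 FS1 FS2) as [U [FU [u1 u2]]].
            exists (g U). split; [exists U; auto|]. split; apply Mk; auto. }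
        apply (Logic.proj2 (Logic.proj2 (P1 _)) Hs _ Dg).
        intros V [W [[T [FT ->]] ->]].
        apply (Logic.proj2 (Logic.proj2 (P2 (g T))) Hs F D).
        intros V [T' [FT' ->]].
        destruct D as [_ D]. destruct (D T T' FT FT') as [U [FU [u1 u2]]].
        apply (Logic.proj1 (P2 (g T)) U T' u2).
        apply (Logic.proj1 (P1 U) (g U)); [apply Mk; auto|].
        apply (Hx (H U (g U))). exists U; auto.
Qed.

End Gen.

Section SemL.
Variable I : interp.

Lemma eq_rect_iff (t : ty) (S S' : pset I t) :
  (forall x, S x <-> S' x) ->
  forall u (e : t = u) x, eq_rect t (pset I) S u e x <-> eq_rect t (pset I) S' u e x.
Proof. intros E u e. destruct e. exact E. Qed.

Lemma iter_iff {B : Type} (F F' : (B -> Prop) -> (B -> Prop)) (b : B -> Prop) :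
  (forall S S', (forall x, S x <-> S' x) -> forall x, F S x <-> F' S' x) ->
  forall k x, Nat.iter k F b x <-> Nat.iter k F' b x.
Proof.
  intros E k. induction k as [|k IH]; simpl; [tauto|].
  apply E. exact IH.
Qed.

Lemma sem_dep s G t f : wf s G t f -> forall (r r' : valX I) rI,
  (forall Y u, lookup G Y = Some u -> forall x, r Y u x <-> r' Y u x) ->
  forall x, sem I f t r rI x <-> sem I f t r' rI x.
Proof.
  induction 1; intros r r' rI Ag x; simpl.
  - tauto.
  - tauto.
  - rewrite (IHwf1 r r' rI Ag x), (IHwf2 r r' rI Ag x). tauto.
  - rewrite (IHwf1 r r' rI Ag x), (IHwf2 r r' rI Ag x). tauto.
  - tauto.
  - apply IHwf; auto.
  - apply IHwf; auto.
  - split; intros [z [h e]]; exists z; split; auto; apply (IHwf r r' rI Ag); auto.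
  - split; intros [z [h e]]; exists z; split; auto; apply (IHwf r r' rI Ag); auto.
  - apply IHwf; auto.
  - apply Ag; auto.
  - apply (IHwf r r' rI); auto.
  - apply iter_iff. intros S S' E y. apply IHwf.
    intros Y u Hl z. unfold updX. simpl in Hl.
    destruct (Y =? X); [|apply Ag; auto].
    injection Hl as <-. destruct (ty_eq_dec t t) as [e|n]; [apply eq_rect_iff; auto | tauto].
  - apply iter_iff. intros S S' E y. apply IHwf.
    intros Y u Hl z. unfold updX. simpl in Hl.
    destruct (Y =? X); [|apply Ag; auto].
    injection Hl as <-. destruct (ty_eq_dec t t) as [e|n]; [apply eq_rect_iff; auto | tauto].
  - split; intros [n h]; exists n; apply (IHwf r r' _ Ag); auto.
  - split; intros h n; apply (IHwf r r' _ Ag); auto.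
  - assert (Ea : forall y, sem I a t1 r rI y <-> sem I a t1 r' rI y)
      by (apply IHwf1; intros Y u Hl; discriminate).
    assert (Eb : forall y, sem I b t2 r rI y <-> sem I b t2 r' rI y)
      by (apply IHwf2; intros Y u Hl; discriminate).
    split; intros h y hy; apply Eb; apply h; apply Ea; auto.
Qed.

Lemma updX_same (r : valX I) X t S S' Y u :
  updX I (updX I r X t S) X t S' Y u = updX I r X t S' Y u.
Proof.
  unfold updX. destruct (Y =? X); [destruct (ty_eq_dec t u)|]; reflexivity.
Qed.

Lemma updX_comm (r : valX I) X t S Y u S' Z v : (X <> Y \/ t <> u) ->
  updX I (updX I r X t S) Y u S' Z v = updX I (updX I r Y u S') X t S Z v.
Proof.
  intros Hd. unfold updX.
  destruct (Z =? Y) eqn:E1; destruct (Z =? X) eqn:E2;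
  repeat match goal with |- context [ty_eq_dec ?a ?b] => destruct (ty_eq_dec a b) end;
  try reflexivity.
  exfalso. apply Nat.eqb_eq in E1, E2. subst. destruct Hd; auto.
Qed.

End SemL.

Lemma main (I : interp) s G t f : wf s G t f ->
  forall rI X sigma (r : valX I), props s (semX I f t r rI X sigma).
Proof.
  induction 1; intros rI X0 sigma r; unfold semX; simpl.
  - exact (props_const s (fun _ : dom I t => True)).
  - exact (props_const s (fun _ : dom I t => False)).
  - exact (props_and s _ _ (IHwf1 rI X0 sigma r) (IHwf2 rI X0 sigma r)).
  - exact (props_or s _ _ (IHwf1 rI X0 sigma r) (IHwf2 rI X0 sigma r)).
  - exact (props_const s (fun x : dom I TUnit => x = top I)).
  - exact (props_pre s _ (proj1 I t1 t2) (IHwf rI X0 sigma r)).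
  - exact (props_pre s _ (proj2 I t1 t2) (IHwf rI X0 sigma r)).
  - exact (props_inj s _ (inj1 I t1 t2) (inj1_inj I t1 t2) (IHwf rI X0 sigma r)).
  - exact (props_inj s _ (inj2 I t1 t2) (inj2_inj I t1 t2) (IHwf rI X0 sigma r)).
  - exact (props_pre s _ (ufold I b) (IHwf rI X0 sigma r)).
  - unfold updX. destruct (X =? X0).
    + destruct (ty_eq_dec sigma t) as [e|n].
      * destruct e. exact (props_id s).
      * exact (props_const s (r X t)).
    + exact (props_const s (r X t)).
  - exact (IHwf rI X0 sigma r).
  - apply (props_iter s (fun T S => sem I a t (updX I (updX I r X0 sigma T) X t S) rI)).
    + intros T. exact (IHwf rI X t (updX I r X0 sigma T)).
    + intros S. destruct (Nat.eq_dec X0 X) as [e1|n1]; [destruct (ty_eq_dec sigma t) as [e2|n2]|].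
      * subst. apply (props_ext s _ (fun _ => sem I a t (updX I r X t S) rI)); [|apply props_const].
        intros T x. apply (sem_dep I _ _ _ _ H). intros Y u _ z. rewrite updX_same. tauto.
      * apply (props_ext s _ (semX I a t (updX I r X t S) rI X0 sigma)); [|apply IHwf].
        intros T x. apply (sem_dep I _ _ _ _ H). intros Y u _ z. rewrite updX_comm by auto. tauto.
      * apply (props_ext s _ (semX I a t (updX I r X t S) rI X0 sigma)); [|apply IHwf].
        intros T x. apply (sem_dep I _ _ _ _ H). intros Y u _ z. rewrite updX_comm by auto. tauto.
  - apply (props_iter s (fun T S => sem I a t (updX I (updX I r X0 sigma T) X t S) rI)).
    + intros T. exact (IHwf rI X t (updX I r X0 sigma T)).
    + intros S. destruct (Nat.eq_dec X0 X) as [e1|n1]; [destruct (ty_eq_dec sigma t) as [e2|n2]|].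
      * subst. apply (props_ext s _ (fun _ => sem I a t (updX I r X t S) rI)); [|apply props_const].
        intros T x. apply (sem_dep I _ _ _ _ H). intros Y u _ z. rewrite updX_same. tauto.
      * apply (props_ext s _ (semX I a t (updX I r X t S) rI X0 sigma)); [|apply IHwf].
        intros T x. apply (sem_dep I _ _ _ _ H). intros Y u _ z. rewrite updX_comm by auto. tauto.
      * apply (props_ext s _ (semX I a t (updX I r X t S) rI X0 sigma)); [|apply IHwf].
        intros T x. apply (sem_dep I _ _ _ _ H). intros Y u _ z. rewrite updX_comm by auto. tauto.
  - exact (props_ex' PPlus (fun n S => sem I a t (updX I r X0 sigma S) (updI rI i n))
             (fun n => IHwf (updI rI i n) X0 sigma r) eq_refl).
  - exact (props_all PMinus (fun n S => sem I a t (updX I r X0 sigma S) (updI rI i n))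
             (fun n => IHwf (updI rI i n) X0 sigma r) eq_refl).
  - apply (props_ext s _ (fun _ => sem I (FImp a b) (TArr t1 t2) r rI)); [|apply props_const].
    intros S x. apply (sem_dep I _ _ _ _ (wf_imp s t1 t2 a b H H0)).
    intros Y u Hl; discriminate.
Qed.

Theorem proposition5p6 (I : interp) (G : ctx) (r : valX I) (rI : nat -> nat)
  (X : nat) (sigma tau : ty) (s : pol) (phi : form) :
  ctx_closed G -> closed_ty tau ->
  lookup G X = Some sigma ->
  wf s G tau phi ->
  (* (1) monotone *)
  (forall S T : pset I sigma, subset S T ->
     subset (semX I phi tau r rI X sigma S) (semX I phi tau r rI X sigma T)) /\
  (* (2) preserves directed unions *)
  (s = PPlus -> forall F : pset I sigma -> Prop, directed F ->
     set_eq (semX I phi tau r rI X sigma (bigunion F))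
            (bigunion (image_fam (semX I phi tau r rI X sigma) F))) /\
  (* (3) preserves codirected intersections *)
  (s = PMinus -> forall F : pset I sigma -> Prop, codirected F ->
     set_eq (semX I phi tau r rI X sigma (bigcap F))
            (bigcap (image_fam (semX I phi tau r rI X sigma) F))).
Proof.
  intros _ _ _ W. exact (main I s G tau phi W rI X sigma r).
Qed.
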